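(* Let $S$ be a numerical semigroup with minimal generators $a_1<a_2<\cdots<a_\nu$ ($\nu\ge2$), multiplicity $\mu=a_1$ and conductor $c$, and suppose $a_2>\frac{c+\mu}{3}$. Let $P=\{a_1,\dots,a_\nu\}$, $P_1=\{a\in P\setminus\{\mu\}: \tfrac13(c+\mu)<a<\tfrac12(c+\mu)\}$, $P_2=\{a\in P\setminus\{\mu\}: \tfrac12(c+\mu)\le a<\tfrac23(c+\mu)\}$, $q_i=|P_i|$, and $L=\{x\in S:0\le x<c\}$. Let $\sigma$ be the maximal cardinality of an independent set of Apéry pairs. Then $$|L|\ge\left\lfloor\frac{c}{\mu}\right\rfloor(1+\sigma)+\left(\left\lfloor\frac12\frac{c}{\mu}-\frac12\right\rfloor+1\right)(q_1-\sigma)+\left(\left\lfloor\frac13\frac{c}{\mu}-\frac23\right\rfloor+1\right)(q_2-\sigma).$$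
   Context: A numerical semigroup is a submonoid $S\subseteq\mathbb{N}$ with finite complement; $\nu$ is the number of minimal generators, $\mu$ (multiplicity) the smallest one, and $c$ (conductor) the least integer with $c+\mathbb{N}\subseteq S$. The Apéry set of $S$ (with respect to $\mu$) is $\mathrm{Ap}(S)=\{x\in S: x-\mu\notin S\}$. An Apéry pair is a pair $(a,b)\in P_1\times P_2$ with $a+b\in\mathrm{Ap}(S)$. A set $\{(a_i,b_i)\}_{i=1}^n$ of Apéry pairs is independent if $a_i\ne a_j$ and $b_i\ne b_j$ for all $i\ne j$. *)

(* Defs.v *)
From mathcomp Require Import all_boot all_order all_algebra.
Set Implicit Arguments. Unset Strict Implicit. Unset Printing Implicit Defensive.

Definition numerical_semigroup (S : pred nat) : Prop :=
  [/\ S 0, (forall x y, S x -> S y -> S (x + y)) &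
      exists N, forall n, N <= n -> S n].

Definition is_multiplicity (S : pred nat) (mu : nat) : Prop :=
  [/\ 0 < mu, S mu & forall x, 0 < x -> S x -> mu <= x].

Definition is_conductor (S : pred nat) (c : nat) : Prop :=
  (forall n, c <= n -> S n) /\
  (forall c', (forall n, c' <= n -> S n) -> c <= c').

Definition mingen (S : pred nat) (a : nat) : bool :=
  [&& 0 < a, S a & ~~ [exists x : 'I_a, (0 < (x : nat)) && S x && S (a - x)]].

Definition apery (S : pred nat) (mu x : nat) : bool :=
  S x && ((x < mu) || ~~ S (x - mu)).

Definition P1 (S : pred nat) (mu c : nat) : seq nat :=
  [seq a <- iota 0 (c + mu) |
     [&& mingen S a, a != mu, c + mu < 3 * a & 2 * a < c + mu]].
Definition P2 (S : pred nat) (mu c : nat) : seq nat :=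
  [seq a <- iota 0 (c + mu) |
     [&& mingen S a, a != mu, c + mu <= 2 * a & 3 * a < 2 * (c + mu)]].

Definition apery_pair (S : pred nat) (mu c : nat) (p : nat * nat) : bool :=
  [&& p.1 \in P1 S mu c, p.2 \in P2 S mu c & apery S mu (p.1 + p.2)].

Definition independent (S : pred nat) (mu c : nat) (s : seq (nat * nat)) : bool :=
  [&& all (apery_pair S mu c) s, uniq (map fst s) & uniq (map snd s)].

Definition is_max_indep (S : pred nat) (mu c sigma : nat) : Prop :=
  (exists s, independent S mu c s /\ size s = sigma) /\
  (forall s, independent S mu c s -> size s <= sigma).

Definition Lset (S : pred nat) (c : nat) : seq nat := [seq x <- iota 0 c | S x].

(* Main.v *)
Require Import Defs.
From mathcomp Require Import all_boot all_order all_algebra.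
From mathcomp Require Import zify.
Import GRing.Theory Num.Theory.

Definition chain (mu h y : nat) : bool := (h <= y) && (mu %| y - h).
Definition fcnt (c mu h : nat) : nat := (c + mu - 1 - h) %/ mu.

Lemma count_chain c mu h : 0 < mu -> fcnt c mu h <= count (chain mu h) (iota 0 c).
Proof.
move=> mu0; set n := fcnt c mu h.
rewrite -size_filter.
have -> : n = size [seq h + k * mu | k <- iota 0 n] by rewrite size_map size_iota.
apply: uniq_leq_size.
  rewrite map_inj_uniq ?iota_uniq // => x y /eqP.
  by rewrite eqn_add2l eqn_pmul2r // => /eqP.
move=> y /mapP [k]; rewrite mem_iota add0n => kn ->.
rewrite mem_filter /chain leq_addr addKn dvdn_mull ?dvdnn //= mem_iota add0n /=.
have : k.+1 * mu <= c + mu - 1 - h by rewrite -leq_divRL.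
rewrite mulSn. lia.
Qed.

Lemma count_has_sum (p : nat -> nat -> bool) (H : seq nat) (s : seq nat) :
  uniq H ->
  (forall h h' y, h \in H -> h' \in H -> h != h' -> p h y -> p h' y -> False) ->
  count (fun y => has (fun h => p h y) H) s = \sum_(h <- H) count (p h) s.
Proof.
elim: H => [|h H IH] /=.
  by move=> _ _; rewrite big_nil (eq_count (a2 := pred0)) ?count_pred0.
move=> /andP [hH uH] dj.
have dj' : forall h0 h' y, h0 \in H -> h' \in H -> h0 != h' -> p h0 y -> p h' y -> False.
  by move=> x x' y xH x'H; apply: dj; rewrite inE ?xH ?x'H orbT.
rewrite big_cons -(IH uH dj').
have E := count_predUI (p h) (fun y => has (fun h => p h y) H) s.
rewrite (@eq_count _ (predI _ _) pred0) ?count_pred0 ?addn0 in E.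
  exact: E.
move=> y /=; apply/negP => /andP [py /hasP [h' h'H py']].
apply: (dj h h' y) => //; first by rewrite inE eqxx.
  by rewrite inE h'H orbT.
by apply/eqP => E; move: hH; rewrite E h'H.
Qed.

Lemma lb_int (l : seq nat) (g : nat -> nat) (k : int) :
  (forall x, x \in l -> (k <= (g x)%:Z)%R) ->
  (k * (size l)%:Z <= (\sum_(x <- l) g x)%:Z)%R.
Proof.
elim: l => [|x l IH] /=; first by rewrite big_nil mulr0.
move=> hl; rewrite big_cons PoszD -addn1 PoszD mulrDr mulr1 addrC.
apply: lerD; first by apply: hl; rewrite inE eqxx.
by apply: IH => y yl; apply: hl; rewrite inE yl orbT.
Qed.

Lemma S_addmul (S : pred nat) mu h k :
  numerical_semigroup S -> S mu -> S h -> S (h + k * mu).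
Proof.
case=> S0 Sadd _ Smu Sh; elim: k => [|k IH]; first by rewrite mul0n addn0.
have -> : h + k.+1 * mu = (h + k * mu) + mu by rewrite mulSn; lia.
exact: Sadd.
Qed.

Lemma mingen_no (S : pred nat) mu h h' :
  numerical_semigroup S -> S mu -> 0 < mu -> S h -> mingen S h' -> h' != mu ->
  h < h' -> mu %| h' - h -> False.
Proof.
move=> nsS Smu mu0 Sh mg nmu lt /dvdnP [k hk].
have k0 : 0 < k by case: k hk => [|k]; [rewrite mul0n; lia|].
have ltm : mu < h'.
  rewrite ltn_neqAle eq_sym nmu /=; have : mu <= k * mu by rewrite leq_pmull.
  lia.
have E : h' - mu = h + k.-1 * mu.
  have : k = k.-1.+1 by rewrite prednK.
  move=> Ek; move: hk; rewrite {1}Ek mulSn; lia.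
move: mg => /and3P [_ _ /existsP nE]; apply: nE.
exists (Ordinal ltm) => /=; rewrite mu0 Smu /= E.
exact: S_addmul.
Qed.

Lemma b1_lem c mu x : 0 < mu -> 2 * x < c + mu ->
  (divz (c%:Z - mu%:Z) (2 * mu)%:Z + 1 <= (fcnt c mu x)%:Z)%R.
Proof.
move=> mu0 hx.
have nz : ((2 * mu)%:Z != 0)%R by rewrite eqz_nat; lia.
have hz := @lez_floor (c%:Z - mu%:Z)%R (2 * mu)%:Z%R nz.
case E: (divz _ _) hz => [k|k] hz.
  have : (k.+1 <= fcnt c mu x).
    rewrite /fcnt leq_divRL //. Timeout 30 lia.
  Timeout 30 lia.
rewrite NegzE. Timeout 30 lia.
Qed.

Lemma b2_lem c mu x : 0 < mu -> 3 * x < 2 * (c + mu) ->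
  (divz (c%:Z - (2 * mu)%:Z) (3 * mu)%:Z + 1 <= (fcnt c mu x)%:Z)%R.
Proof.
move=> mu0 hx.
have nz : ((3 * mu)%:Z != 0)%R by rewrite eqz_nat; lia.
have hz := @lez_floor (c%:Z - (2 * mu)%:Z)%R (3 * mu)%:Z%R nz.
case E: (divz _ _) hz => [k|k] hz.
  have : (k.+1 <= fcnt c mu x).
    rewrite /fcnt leq_divRL //. Timeout 30 lia.
  Timeout 30 lia.
rewrite NegzE. Timeout 30 lia.
Qed.

Theorem proposition3p3 (S : pred nat) (mu c a2 sigma : nat) :
  numerical_semigroup S ->
  is_multiplicity S mu ->
  is_conductor S c ->
  (* a2 is the second smallest minimal generator (so nu >= 2) *)
  mingen S a2 -> a2 != mu ->
  (forall a, mingen S a -> a != mu -> a2 <= a) ->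
  c + mu < 3 * a2 ->
  is_max_indep S mu c sigma ->
  ((c %/ mu)%:Z * (1 + sigma%:Z)
   + (divz (c%:Z - mu%:Z) (2 * mu)%:Z + 1) * ((size (P1 S mu c))%:Z - sigma%:Z)
   + (divz (c%:Z - (2 * mu)%:Z) (3 * mu)%:Z + 1) * ((size (P2 S mu c))%:Z - sigma%:Z)
   <= (size (Lset S c))%:Z)%R.
Proof.
move=> nsS [mu0 Smu _] [condS _] _ _ _ _ [[s [/and3P [allp uF uSd] sz]] _].
have S0 : S 0 by case: nsS.
set Q1 := P1 S mu c; set Q2 := P2 S mu c.
set F := map fst s; set Sd := map snd s.
have memP1 a : a \in Q1 -> [/\ mingen S a, a != mu & 2 * a < c + mu].
  by rewrite mem_filter => /andP [/and4P [-> -> _ ->] _].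
have memP2 b : b \in Q2 -> [/\ mingen S b, b != mu, c + mu <= 2 * b & 3 * b < 2 * (c + mu)].
  by rewrite mem_filter => /andP [/and4P [-> -> -> ->] _].
have uQ1 : uniq Q1 by rewrite filter_uniq ?iota_uniq.
have uQ2 : uniq Q2 by rewrite filter_uniq ?iota_uniq.
set H := 0 :: Q1 ++ Q2.
have inH h : h \in H -> h = 0 \/ [/\ mingen S h & h != mu].
  rewrite inE mem_cat => /orP [/eqP ->|/orP [/memP1 [? ? _]|/memP2 [? ? _ _]]]; by [left|right].
have uH : uniq H.
  rewrite /H cons_uniq cat_uniq uQ1 uQ2 /= andbT mem_cat negb_or; apply/andP; split.
    apply/andP; split; apply/negP.
      by move/memP1 => [/and3P [] ].
    by move/memP2 => [/and3P [] ].
  apply/hasP => [[b /memP2 [_ _ hb _] /memP1 [_ _ ha]]]; lia.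
have SH h : h \in H -> S h.
  by case/inH => [->|[/and3P [] ]].
have disj : forall h h' y, h \in H -> h' \in H -> h != h' ->
    chain mu h y -> chain mu h' y -> False.
  have key : forall h h' y, h \in H -> h' \in H -> h < h' ->
      chain mu h y -> chain mu h' y -> False.
    move=> h h' y hH h'H lt /andP [hy d1] /andP [h'y d2].
    case: (inH _ h'H) => [E|[mg nm]]; first by rewrite E in lt.
    apply: (@mingen_no S mu h h' nsS Smu mu0 (SH _ hH) mg nm lt).
    have -> : h' - h = (y - h) - (y - h') by lia.
    exact: dvdn_sub.
  move=> h h' y hH h'H ne c1 c2; case: (ltngtP h h') => [lt|lt|E].
  - exact: (key h h' y).
  - exact: (key h' h y).
  - by rewrite E eqxx in ne.
have cnt : \sum_(h <- H) fcnt c mu h <= size (Lset S c).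
  rewrite /Lset size_filter.
  apply: (@leq_trans (\sum_(h <- H) count (chain mu h) (iota 0 c))).
    by apply: leq_sum => h _; exact: count_chain.
  rewrite -(@count_has_sum (chain mu) H (iota 0 c)) //.
  apply: sub_count => y /hasP [h hH /andP [hy dv]].
  have -> : y = h + (y - h) %/ mu * mu by rewrite divnK // subnKC.
  exact: (@S_addmul S mu h _ nsS Smu (SH _ hH)).
rewrite big_cons big_cat /= in cnt.
have f0 : c %/ mu <= fcnt c mu 0 by rewrite /fcnt subn0; apply: leq_div2r; lia.
have pairb : forall a b, apery_pair S mu c (a, b) -> c %/ mu <= fcnt c mu a + fcnt c mu b.
  move=> a b /and3P [_ _]; rewrite /apery /= => /andP [Sab hab].
  have lt : a + b < c + mu.
    case/orP: hab => [l|nS]; first lia.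
    case: (leqP c (a + b - mu)) => [l|l]; first by rewrite condS in nS.
    lia.
  rewrite leqNgt; apply/negP => contra.
  have h1 := ltn_ceil (c + mu - 1 - a) mu0; have h2 := ltn_ceil (c + mu - 1 - b) mu0.
  have h3 : (fcnt c mu a + fcnt c mu b).+1 * mu <= c %/ mu * mu.
    by rewrite leq_mul2r contra orbT.
  have h4 := leq_trunc_div c mu.
  rewrite /fcnt in h3 contra.
  move: h1 h2 h3 h4.
  set qa := (c + mu - 1 - a) %/ mu; set qb := (c + mu - 1 - b) %/ mu; set n := c %/ mu.
  lia.
have FQ1 : {subset F <= Q1}.
  by move=> x /mapP [[a b] ps ->]; have := allP allp _ ps; case/and3P.
have SQ2 : {subset Sd <= Q2}.
  by move=> x /mapP [[a b] ps ->]; have := allP allp _ ps; case/and3P.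
have hY : sigma * (c %/ mu) <= \sum_(a <- F) fcnt c mu a + \sum_(b <- Sd) fcnt c mu b.
  rewrite !big_map -big_split /= -sz.
  apply: (@leq_trans (\sum_(p <- s) c %/ mu)).
    by rewrite big_const_seq count_predT iter_addn addn0 mulnC.
  rewrite [X in _ <= X]big_seq [X in X <= _]big_seq; apply: leq_sum => -[a b] ps.
  exact: pairb (allP allp _ ps).
have pF : perm_eq [seq x <- Q1 | x \in F] F.
  apply: uniq_perm; [exact: filter_uniq uQ1 | exact: uF | move=> x; rewrite mem_filter].
  by apply/andP/idP => [[]//|xF]; split=> //; exact: FQ1.
have pS : perm_eq [seq x <- Q2 | x \in Sd] Sd.
  apply: uniq_perm; [exact: filter_uniq uQ2 | exact: uSd | move=> x; rewrite mem_filter].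
  by apply/andP/idP => [[]//|xF]; split=> //; exact: SQ2.
have sumQ1 : \sum_(h <- Q1) fcnt c mu h = \sum_(h <- F) fcnt c mu h
     + \sum_(h <- [seq x <- Q1 | x \notin F]) fcnt c mu h.
  by rewrite (bigID (fun i => i \in F)) /= -big_filter (perm_big _ pF) big_filter.
have sumQ2 : \sum_(h <- Q2) fcnt c mu h = \sum_(h <- Sd) fcnt c mu h
     + \sum_(h <- [seq x <- Q2 | x \notin Sd]) fcnt c mu h.
  by rewrite (bigID (fun i => i \in Sd)) /= -big_filter (perm_big _ pS) big_filter.
have szQ1 : size Q1 = sigma + size [seq x <- Q1 | x \notin F].
  by rewrite -(count_predC (mem F) Q1) -!size_filter (perm_size pF) size_map sz.
have szQ2 : size Q2 = sigma + size [seq x <- Q2 | x \notin Sd].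
  by rewrite -(count_predC (mem Sd) Q2) -!size_filter (perm_size pS) size_map sz.
have b1 x : 2 * x < c + mu -> (divz (c%:Z - mu%:Z) (2 * mu)%:Z + 1 <= (fcnt c mu x)%:Z)%R.
  exact: b1_lem.
have b2 x : 3 * x < 2 * (c + mu) -> (divz (c%:Z - (2 * mu)%:Z) (3 * mu)%:Z + 1 <= (fcnt c mu x)%:Z)%R.
  exact: b2_lem.
have X1 : ((divz (c%:Z - mu%:Z) (2 * mu)%:Z + 1) * (size [seq x <- Q1 | x \notin F])%:Z
     <= (\sum_(h <- [seq x <- Q1 | x \notin F]) fcnt c mu h)%:Z)%R.
  by apply: lb_int => x; rewrite mem_filter => /andP [_ /memP1 [_ _ h]]; exact: b1.
have X2 : ((divz (c%:Z - (2 * mu)%:Z) (3 * mu)%:Z + 1) * (size [seq x <- Q2 | x \notin Sd])%:Z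
     <= (\sum_(h <- [seq x <- Q2 | x \notin Sd]) fcnt c mu h)%:Z)%R.
  by apply: lb_int => x; rewrite mem_filter => /andP [_ /memP2 [_ _ _ h]]; exact: b2.
rewrite szQ1 szQ2 sumQ1 sumQ2 in cnt *.
move: X1 X2 cnt hY f0.
set z1 := divz _ _; set z2 := divz _ _.
set r1 := size _; set r2 := size _.
set A := \sum_(h <- F) _; set B := \sum_(h <- Sd) _.
set C1 := \sum_(h <- _) _; set C2 := \sum_(h <- _) _.
set f00 := fcnt c mu 0; set n := c %/ mu; set N := size _.
clearbody z1 z2 r1 r2 A B C1 C2 f00 n N.
clear.
lia.
Qed.
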